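(* Let $\mu$ be a measure on $L_n$ and define $\tilde\mu(j)=\mu(j)+\mu(n+1-j)$ for $1\le j\le n$. Then $C^0_{\tilde\mu}\le C^0_\mu$ and $C_{\tilde\mu}\le C_\mu$.
   Context: $L_n$ is the path graph with vertices $\{1,\dots,n\}$ and edges $\{j,j+1\}$, with distance $|i-j|$. A measure on $L_n$ is a weight function $\mu:\{1,\dots,n\}\to(0,\infty)$, $\mu(A)=\sum_{v\in A}\mu(v)$. Closed balls: $B(x,r)=\{y:|x-y|\le r\}$. $C_\mu=\sup\{\mu(B(x,2k+1))/\mu(B(x,k)):1\le x\le n,\ k\ge0\}$ and $C^0_\mu=\max_x\mu(B(x,1))/\mu(x)$. *)

(* Defs.v *)
From HB Require Import structures.
From mathcomp Require Import all_boot all_order all_algebra.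
From mathcomp Require Import all_classical all_reals.
Set Implicit Arguments. Unset Strict Implicit. Unset Printing Implicit Defensive.
Import Order.TTheory GRing.Theory Num.Theory.
Local Open Scope classical_set_scope.
Local Open Scope ring_scope.

(* The path graph L_n has vertex set {1,...,n}; distance |i - j|. *)
Definition pdist (i j : nat) : nat := ((i - j) + (j - i))%N.

Definition is_measure (R : realType) (n : nat) (mu : nat -> R) : Prop :=
  forall v : nat, (1 <= v <= n)%N -> 0 < mu v.

Definition mu_ball (R : realType) (n : nat) (mu : nat -> R) (x r : nat) : R :=
  \sum_(1 <= y < n.+1 | (pdist x y <= r)%N) mu y.

Definition C_doub (R : realType) (n : nat) (mu : nat -> R) : R :=
  sup [set t : R | exists x k : nat, (1 <= x <= n)%N /\
         t = mu_ball n mu x (k.*2.+1) / mu_ball n mu x k].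

Definition C0_doub (R : realType) (n : nat) (mu : nat -> R) : R :=
  sup [set t : R | exists x : nat, (1 <= x <= n)%N /\
         t = mu_ball n mu x 1 / mu x].

Definition sym_measure (R : realType) (n : nat) (mu : nat -> R) : nat -> R :=
  fun j => mu j + mu (n.+1 - j)%N.

(* Main.v *)
Require Import Defs.
From mathcomp Require Import all_boot all_order all_algebra.
From mathcomp Require Import all_classical all_reals.
From mathcomp Require Import zify.
Import Order.TTheory GRing.Theory Num.Theory.
Local Open Scope classical_set_scope.
Local Open Scope ring_scope.

Section Aux.
Variable R : realType.

Lemma sup_mediant (S T : set R) :
  has_ubound S -> (S !=set0 -> T !=set0) ->
  (forall t, T t -> exists a1 b1 a2 b2, S (a1/b1) /\ S (a2/b2) /\ 0 < b1 /\ 0 < b2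
      /\ t = (a1+a2)/(b1+b2)) ->
  sup T <= sup S.
Proof.
move=> hS hST hT.
case: (pselect (T !=set0)) => [Tn|Tn].
  apply: ge_sup => // t /hT [a1 [b1 [a2 [b2 [s1 [s2 [b1p [b2p ->]]]]]]]].
  have u1 := ub_le_sup hS s1; have u2 := ub_le_sup hS s2.
  rewrite ler_pdivrMr ?addr_gt0 //.
  rewrite ler_pdivrMr // in u1; rewrite ler_pdivrMr // in u2.
  by rewrite mulrDr lerD.
have T0 : T = set0 by apply/eqP/negPn/negP => /set0P.
have S0 : S = set0.
  by apply/eqP/negPn/negP => /set0P /hST.
by rewrite T0 S0.
Qed.

Lemma sum_nonneg (f : nat -> R) n (P : pred nat) :
  (forall i, (1 <= i <= n)%N -> 0 <= f i) -> 0 <= \sum_(1 <= i < n.+1 | P i) f i.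
Proof.
move=> hf; rewrite big_seq_cond; apply: sumr_ge0 => i /andP[].
by rewrite mem_index_iota ltnS => /hf.
Qed.

Lemma le_sum_one (f : nat -> R) n (P : pred nat) j :
  (forall i, (1 <= i <= n)%N -> 0 <= f i) -> (1 <= j <= n)%N -> P j ->
  f j <= \sum_(1 <= i < n.+1 | P i) f i.
Proof.
move=> hf hj Pj.
rewrite big_mkcond (bigD1_seq j) /= ?mem_index_iota ?ltnS ?iota_uniq // Pj.
rewrite lerDl big_seq_cond; apply: sumr_ge0 => i /andP[].
rewrite mem_index_iota ltnS => /hf hi _; by case: (P i).
Qed.

Lemma sum_filter_le (f : nat -> R) n (P : pred nat) :
  (forall i, (1 <= i <= n)%N -> 0 <= f i) ->
  \sum_(1 <= i < n.+1 | P i) f i <= \sum_(1 <= i < n.+1) f i.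
Proof.
move=> hf; rewrite big_mkcond /= [leRHS]big_seq [leLHS]big_seq.
apply: ler_sum => i; rewrite mem_index_iota ltnS => /hf hi.
by case: (P i).
Qed.

Lemma ball_sym n (mu : nat -> R) x r : (1 <= x <= n)%N ->
  mu_ball n (sym_measure n mu) x r = mu_ball n mu x r + mu_ball n mu (n.+1 - x) r.
Proof.
move=> hx; rewrite /mu_ball /sym_measure big_split /=; congr (_ + _).
rewrite big_nat_rev /= add1n.
rewrite big_nat_cond [RHS]big_nat_cond; apply: eq_big => i.
  apply/idP/idP => /andP[/andP[h1 h2] h3]; rewrite h1 h2 /=;
  move: h3; rewrite /pdist; lia.
move=> /andP[/andP[h1 h2] _]; congr (mu _); lia.
Qed.

Lemma ball_pos n (mu : nat -> R) x r : is_measure n mu -> (1 <= x <= n)%N ->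
  mu x <= mu_ball n mu x r.
Proof.
move=> hm hx; apply: le_sum_one => //.
  by move=> i /hm /ltW.
by rewrite /pdist !subnn.
Qed.

End Aux.

Theorem lemma3p1 (R : realType) (n : nat) (mu : nat -> R) :
  is_measure n mu ->
  C0_doub n (sym_measure n mu) <= C0_doub n mu /\
  C_doub n (sym_measure n mu) <= C_doub n mu.
Proof.
move=> hm.
have hm0 : forall i, (1 <= i <= n)%N -> 0 <= mu i by move=> i /hm /ltW.
pose Tot := \sum_(1 <= i < n.+1) mu i.
pose M := \sum_(1 <= x < n.+1) Tot / mu x.
have hM : forall x r b, (1 <= x <= n)%N -> mu x <= b -> mu_ball n mu x r / b <= M.
  move=> x r b hx hb.
  have px := hm x hx.
  have bp : 0 < b := lt_le_trans px hb.
  apply: (@le_trans _ _ (Tot / mu x)).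
    apply: (@le_trans _ _ (Tot / b)).
      by rewrite ler_pM2r ?invr_gt0 //; apply: sum_filter_le.
    rewrite ler_pM2l; last first.
      by apply: lt_le_trans px _; apply: (@le_sum_one R mu n xpredT x).
    by rewrite lef_pV2 ?posrE.
  apply: (@le_sum_one R (fun x => Tot / mu x)) => // i hi.
  by rewrite divr_ge0 //; [apply: sum_nonneg | apply: hm0].
have hx' : forall x, (1 <= x <= n)%N -> (1 <= n.+1 - x <= n)%N by move=> x; lia.
split.
  apply: sup_mediant.
  - by exists M => t [x [hx ->]]; apply: hM.
  - by move=> [t [x [hx _]]]; exists (mu_ball n (sym_measure n mu) x 1 / sym_measure n mu x); exists x.
  move=> t [x [hx ->]].
  exists (mu_ball n mu x 1), (mu x), (mu_ball n mu (n.+1 - x)%N 1), (mu (n.+1 - x)%N).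
  split; first by exists x.
  split; first by exists (n.+1 - x)%N; split => //; apply: hx'.
  split; first exact: hm.
  split; first by apply: hm; apply: hx'.
  by rewrite ball_sym.
apply: sup_mediant.
- by exists M => t [x [k [hx ->]]]; apply: hM => //; apply: ball_pos.
- by move=> [t [x [k [hx _]]]]; exists (mu_ball n (sym_measure n mu) x k.*2.+1 / mu_ball n (sym_measure n mu) x k); exists x, k.
move=> t [x [k [hx ->]]].
exists (mu_ball n mu x k.*2.+1), (mu_ball n mu x k),
  (mu_ball n mu (n.+1 - x)%N k.*2.+1), (mu_ball n mu (n.+1 - x)%N k).
split; first by exists x, k.
split; first by exists (n.+1 - x)%N, k; split => //; apply: hx'.
split; first by apply: lt_le_trans (@ball_pos R n mu _ _ hm hx); apply: hm.
split; first by apply: lt_le_trans (@ball_pos R n mu _ _ hm (hx' _ hx)); apply: hm; apply: hx'.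
by rewrite !ball_sym.
Qed.
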